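(* Consider the following edge-labeled graph (the ''3-color gadget'') with three categories red, blue, green: node set $\{u,v,a,b,c,d\}$ and six edges forming a cycle, namely $\{u,c\}$ labeled blue, $\{c,d\}$ labeled green, $\{d,v\}$ labeled red, $\{v,b\}$ labeled blue, $\{b,a\}$ labeled green, $\{a,u\}$ labeled red. Then the minimum of $\mathrm{CatEdgeClus}(Y)$ over all assignments $Y:\{u,v,a,b,c,d\}\to\{\text{red},\text{blue},\text{green}\}$ equals $3$, and every assignment $Y$ with $\mathrm{CatEdgeClus}(Y)=3$ satisfies $\{Y[u],Y[v]\}=\{\text{red},\text{blue}\}$ (one of $u,v$ is red and the other is blue).
   Context: For an edge-labeled graph with node set $V$, edge collection $E$, categories $C$ and labeling $\ell:E\to C$, and a clustering (node coloring) $Y:V\to C$, an edge $e$ is a mistake ($m_Y(e)=1$) if some endpoint $i\in e$ has $Y[i]\neq\ell(e)$, and $m_Y(e)=0$ otherwise; $\mathrm{CatEdgeClus}(Y)=\sum_{e\in E}m_Y(e)$ is the number of mistakes. *)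

(* Defs.v *)
From HB Require Import structures.
From mathcomp Require Import all_boot.
Set Implicit Arguments. Unset Strict Implicit. Unset Printing Implicit Defensive.

Section CatEdgeClus.
Variables (V C : eqType).

Definition mistake (Y : V -> C) (e : seq V * C) : bool :=
  has (fun i => Y i != e.2) e.1.

Definition CatEdgeClus (E : seq (seq V * C)) (Y : V -> C) : nat :=
  count (mistake Y) E.
End CatEdgeClus.

Inductive color := red | blue | green.
Definition color_code (c : color) : 'I_3 :=
  match c with red => inord 0 | blue => inord 1 | green => inord 2 end.
Definition color_decode (i : 'I_3) : color :=
  match val i with 0 => red | 1 => blue | _ => green end.
Lemma color_codeK : cancel color_code color_decode.
Proof. by case; rewrite /color_decode /= inordK. Qed.
HB.instance Definition _ := Finite.copy color (can_type color_codeK).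

Inductive gnode := u | v | a | b | c | d.
Definition gnode_code (x : gnode) : 'I_6 :=
  match x with u => inord 0 | v => inord 1 | a => inord 2
             | b => inord 3 | c => inord 4 | d => inord 5 end.
Definition gnode_decode (i : 'I_6) : gnode :=
  match val i with 0 => u | 1 => v | 2 => a | 3 => b | 4 => c | _ => d end.
Lemma gnode_codeK : cancel gnode_code gnode_decode.
Proof. by case; rewrite /gnode_decode /= inordK. Qed.
HB.instance Definition _ := Finite.copy gnode (can_type gnode_codeK).

Definition gadget_edges : seq (seq gnode * color) :=
  [:: ([:: u; c], blue); ([:: c; d], green); ([:: d; v], red);
      ([:: v; b], blue); ([:: b; a], green); ([:: a; u], red)].

(* Main.v *)
Require Import Defs.
From mathcomp Require Import all_boot.

Definition ceq (x y : color) : bool :=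
  match x, y with red, red | blue, blue | green, green => true | _, _ => false end.

Lemma neqE (x y : color) : (x != y) = ~~ ceq x y.
Proof.
case: (x =P y) => [->|H]; first by case: y.
by case: x H; case: y => //= H; exfalso; apply: H.
Qed.

Theorem mainTheorem3 :
  (exists Y : gnode -> color, CatEdgeClus gadget_edges Y = 3) /\
  (forall Y : gnode -> color, 3 <= CatEdgeClus gadget_edges Y) /\
  (forall Y : gnode -> color, CatEdgeClus gadget_edges Y = 3 ->
     (Y u = red /\ Y v = blue) \/ (Y u = blue /\ Y v = red)).
Proof.
split.
  exists (fun x => match x with u => red | v => blue | a => red | b => blue | _ => green end).
  by rewrite /CatEdgeClus /mistake /= !neqE.
split=> Y; rewrite /CatEdgeClus /mistake /= !neqE;
  case: (Y u); case: (Y v); case: (Y a); case: (Y b); case: (Y c); case: (Y d);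
  by [| left | right].
Qed.
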